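(* $$\liminf_{a,b\to\infty} r(a,b)=1,$$ where the limit inferior is taken as $\min(a,b)\to\infty$ over pairs of positive integers $(a,b)$.
   Context: $\phi$ denotes Euler's totient function. For positive integers $a,b$, $c(a,b)$ is the least positive integer $c$ such that $\phi(a!)\,\phi(b!)$ divides $\phi(c!)$, and $r(a,b)=c(a,b)/(a+b)$. *)

(* Defs.v *)
From mathcomp Require Import all_boot all_order all_algebra.
From Stdlib Require Import ClassicalEpsilon.
Set Implicit Arguments. Unset Strict Implicit. Unset Printing Implicit Defensive.
Import Order.TTheory GRing.Theory Num.Theory.

Definition c_adm (a b : nat) : pred nat :=
  fun c => (0 < c) && (totient a`! * totient b`! %| totient c`!).

(* c(a,b): least positive c with phi(a!)phi(b!) | phi(c!)
   (such c always exists; the default 0 is never used) *)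
Definition c_ab (a b : nat) : nat :=
  match excluded_middle_informative (exists c, c_adm a b c) with
  | left H => ex_minn H
  | right _ => 0
  end.

Definition r_ab (a b : nat) : rat := ((c_ab a b)%:R / (a + b)%:R)%R.

(* Main.v *)
Require Import Defs.
From mathcomp Require Import all_boot all_order all_algebra zify ring lra.
From Stdlib Require Import ClassicalEpsilon.
Import Order.TTheory GRing.Theory Num.Theory.

Lemma ndvd_fact p n : prime p -> n < p -> ~~ (p %| n`!).
Proof.
move=> pp; elim: n => [|n IH] lt.
  by rewrite fact0 gtnNdvd // prime_gt1.
rewrite factS Euclid_dvdM // negb_or IH ?(ltnW lt) // andbT.
by rewrite gtnNdvd.
Qed.

Lemma phi_pm p m : prime p -> p %| m -> totient (p * m) = p * totient m.
Proof.
move=> pp pm; case: (posnP m) => [->|m0]; first by rewrite muln0.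
have [q cpq mE] := pfactor_coprime pp m0.
have e0 : 0 < logn p m by rewrite -(pfactor_dvdn 1 pp m0) expn1.
set e := logn p m in mE e0 *.
have cq : forall k, coprime q (p ^ k) by move=> k; rewrite coprime_sym coprimeXl.
rewrite mE mulnCA -expnS !totient_coprime // !totient_pfactor //.
case: e e0 {mE} => // e _ /=; rewrite expnS; ring.
Qed.

Lemma phi_mul j n : (forall p, prime p -> p %| j -> p %| n) ->
  totient (j * n) = j * totient n.
Proof.
elim: j {-2}j (leqnn j) => [|J IH] j lej H.
  by move: lej; rewrite leqn0 => /eqP ->.
case: (ltnP 1 j) => j1; last first.
  case: j j1 {lej H} => [|[|j]] //= _; by rewrite ?mul1n.
have [p pp pj] := pdivP j1.
have jE : j = p * (j %/ p) by rewrite mulnC divnK.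
have ltj : j %/ p < j by apply: ltn_Pdiv; [exact: prime_gt1 | exact: ltnW].
have Hq : forall q, prime q -> q %| j %/ p -> q %| n.
  move=> q qp qd; apply: H => //; rewrite jE; exact: dvdn_mull.
rewrite jE -mulnA phi_pm //; last by apply: dvdn_mull; exact: H.
by rewrite IH ?mulnA // -ltnS (leq_trans ltj).
Qed.

Lemma phi_fact_S n : totient (n.+1)`! = (if prime n.+1 then n else n.+1) * totient n`!.
Proof.
rewrite factS; case: ifP => pr.
  rewrite totient_coprime; first by rewrite totient_prime.
  by rewrite prime_coprime // ndvd_fact.
apply: phi_mul => q qp qd.
have qn : q != n.+1 by apply/eqP => E; rewrite -E qp in pr.
apply: dvdn_fact; rewrite prime_gt0 //=.
by have := dvdn_leq (ltn0Sn n) qd; rewrite leq_eqVlt (negbTE qn).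
Qed.

Lemma phi_mono n m : n <= m -> totient n`! %| totient m`!.
Proof.
elim: m => [|m IH]; first by rewrite leqn0 => /eqP ->.
rewrite leq_eqVlt => /orP [/eqP -> //|]; rewrite ltnS => /IH h.
by rewrite phi_fact_S dvdn_mull.
Qed.

Lemma gap_phi L k t : k < L -> t <= k ->
  totient (L`!.+1 + t)`! * (L`!.+1)`! = totient (L`!.+1)`! * (L`!.+1 + t)`!.
Proof.
move=> kL; elim: t => [|t IH] tk; first by rewrite addn0 mulnC.
rewrite addnS phi_fact_S.
have np : ~~ prime (L`!.+1 + t).+1.
  apply/negP => pr.
  have d1 : t.+2 %| L`! by apply: dvdn_fact => /=; lia.
  have d2 : t.+2 %| (L`!.+1 + t).+1.
    by rewrite -addnS addSn -addnS dvdn_addr.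
  have := prime_nt_dvdP (d:=t.+2) pr isT.
  move/(_ d2) => E; have := fact_gt0 L; lia.
rewrite (negbTE np) -mulnA IH ?(ltnW tk) // (factS (L`!.+1 + t)); ring.
Qed.

Lemma adm_exists a b L : totient a`! < L -> b <= L`!.+1 ->
  c_adm a b (L`!.+1 + totient a`!).
Proof.
move=> kL bB; set k := totient a`!; set B := L`!.+1.
apply/andP; split; first by rewrite addSn.
have h := @gap_phi L k k kL (leqnn k).
have bf := bin_fact (leq_addl B k).
rewrite addnK in bf.
have eq : totient (B + k)`! = totient B`! * ('C(B + k, k) * k`!).
  apply/eqP; rewrite -(eqn_pmul2r (fact_gt0 B)) h -bf; apply/eqP; ring.
rewrite eq mulnC; apply: dvdn_mul; first exact: phi_mono.
apply: dvdn_mull; apply: dvdn_fact.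
by rewrite leqnn andbT /k totient_gt0 fact_gt0.
Qed.

Lemma c_ab_spec a b : c_adm a b (c_ab a b) /\ forall c, c_adm a b c -> c_ab a b <= c.
Proof.
rewrite /c_ab; case: excluded_middle_informative => [H|H].
  by case: ex_minnP.
exfalso; apply: H.
exists ((totient a`! + b).+1`!.+1 + totient a`!); apply: adm_exists => //.
  by rewrite ltnS leq_addr.
apply: leqW; apply: (leq_trans _ (fact_geq _)); lia.
Qed.
Definition pi n := \sum_(0 <= i < n.+1) (prime i : nat).
Definition Bc m := \sum_(m.+1 <= i < m.*2.+1) (prime i : nat).

Lemma binub n k : 'C(n, k) <= 2 ^ n.
Proof.
elim: n k => [|n IH] [|k] //; first by rewrite bin0 expn_gt0.
rewrite binS expnS mul2n -addnn; apply: leq_add; exact: IH.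
Qed.

Lemma prod_pow (s : seq nat) m :
  \prod_(i <- s) (if prime i then m else 1) = m ^ (\sum_(i <- s) (prime i : nat)).
Proof.
elim: s => [|x s IH]; first by rewrite !big_nil.
by rewrite !big_cons IH expnD; case: (prime x); rewrite ?expn1 ?expn0 ?mul1n.
Qed.

Lemma prodP_dvd m :
  \prod_(m.+1 <= i < m.*2.+1) (if prime i then i else 1) %| 'C(m.*2, m).
Proof.
set P := \prod_(_ <= i < _) _.
set Q := \prod_(m.+1 <= i < m.*2.+1) i.
have h1 : (m.*2)`! = m`! * Q.
  rewrite !fact_prod (@big_cat_nat _ _ _ m.+1) //=; lia.
have h2 := bin_fact (leq_addl m m); rewrite addnK addnn in h2.
have h3 : Q = 'C(m.*2, m) * m`!.
  apply/eqP; rewrite -(eqn_pmul2l (fact_gt0 m)) -h1 -h2; apply/eqP; ring.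
have PQ : P %| Q.
  apply: (big_ind2 (fun x y => x %| y)) => //; first by move=> *; exact: dvdn_mul.
  by move=> i _; case: (prime i); rewrite ?dvd1n.
have cP : coprime P m`!.
  rewrite /P big_seq; apply: (big_ind (fun x => coprime x m`!)).
  - exact: coprime1n.
  - by move=> x y cx cy; rewrite coprimeMl cx cy.
  move=> i; rewrite mem_index_iota => /andP [mi _].
  case pr: (prime i); last exact: coprime1n.
  by rewrite prime_coprime // ndvd_fact.
by rewrite -(Gauss_dvdl _ cP) -h3.
Qed.

Lemma cheb m t : 2 ^ t <= m -> t * Bc m <= m.*2.
Proof.
move=> tm.
have key : (2 ^ t) ^ (Bc m) <= 2 ^ m.*2.
  apply: leq_trans (binub m.*2 m).
  apply: leq_trans (dvdn_leq _ (prodP_dvd m)); last by rewrite bin_gt0 -addnn leq_addl.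
  rewrite /Bc -prod_pow big_seq [X in _ <= X]big_seq; apply: leq_prod => i.
  rewrite mem_index_iota => /andP [mi _]; case: (prime i) => //.
  apply: leq_trans tm _; exact: ltnW.
by rewrite -expnM leq_exp2l in key.
Qed.

Lemma pi_split m : pi m.*2 = pi m + Bc m.
Proof. rewrite /pi /Bc (@big_cat_nat _ _ _ m.+1) //=; lia. Qed.

Lemma pi_add n r : pi (n + r) <= pi n + r.
Proof.
rewrite /pi (@big_cat_nat _ _ _ n.+1) //=; last lia.
rewrite leq_add2l.
apply: (@leq_trans (\sum_(n.+1 <= i < (n + r).+1) 1)).
  by apply: leq_sum => i _; exact: leq_b1.
by rewrite sum_nat_const_nat muln1; lia.
Qed.

Lemma pi_le n : pi n <= n.
Proof.
elim: n => [|n IH]; first by rewrite /pi big_nat1.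
by rewrite /pi big_nat_recr //= -/(pi n) -addn1 leq_add // leq_b1.
Qed.

Lemma pi_bound t n : t * pi n <= t * 2 ^ t.+1 + 4 * n.
Proof.
elim: n {-2}n (leqnn n) => [|N IH] n nN.
  by move: nN; rewrite leqn0 => /eqP ->; rewrite /pi big_nat1 /= muln0.
case: (leqP n (2 ^ t.+1)) => hn.
  apply: leq_trans (leq_addr _ _); rewrite leq_mul2l; apply/orP; right.
  exact: leq_trans (pi_le n) hn.
set m := n./2.
have nE : n = m.*2 + odd n by rewrite /m -{1}(odd_double_half n) addnC.
have nE2 : n = 2 * m + odd n by rewrite mul2n -nE.
have o1 := leq_b1 (odd n).
have m2 : 2 ^ t <= m.
  move: hn; rewrite expnS; clearbody m; lia.
have tm : t <= m by apply: leq_trans m2; exact: ltnW (ltn_expl t (ltnSn 1)).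
have ltm : m < n by have := expn_gt0 2 t; clearbody m; lia.
have IHm := IH m (ltnSE (leq_trans ltm nN)).
have C := @cheb m t m2.
have h1 := pi_add m.*2 (odd n).
rewrite -nE pi_split in h1.
have h2 : t * pi n <= t * pi m + t * Bc m + t * odd n.
  by rewrite -!mulnDr leq_mul2l h1 orbT.
have := leq_mul2l t (odd n) 1; rewrite o1 orbT => h3.
move: IHm C h2 h3; rewrite -mul2n; clearbody m; nia.
Qed.
Lemma tele_up c J d :
  \sum_(J.+1 <= k < (J + d).+1) c %/ 2 ^ k + c %/ 2 ^ (J + d) <= c %/ 2 ^ J.
Proof.
elim: d => [|d IH]; first by rewrite addn0 big_geq.
rewrite addnS big_nat_recr /=; last by rewrite ltnS leq_addr.
rewrite expnSr divnMA -addnA; apply: leq_trans IH; rewrite leq_add2l.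
set y := c %/ 2 ^ (J + d); rewrite addnn -mul2n mulnC; exact: leq_divM.
Qed.

Lemma tele_low n K :
  n <= \sum_(1 <= k < K.+1) n %/ 2 ^ k + n %/ 2 ^ K + K.
Proof.
elim: K => [|K IH]; first by rewrite big_geq // expn0 divn1 addn0.
rewrite big_nat_recr //= expnSr divnMA; apply: leq_trans IH _.
set y := n %/ 2 ^ K.
have := divn_eq y 2; have := ltn_pmod y (ltn0Sn 1).
set q := y %/ 2; set r := y %% 2; lia.
Qed.

Lemma w_up n : logn 2 n`! <= n.
Proof.
rewrite logn_fact //; have := tele_up n 0 n; rewrite add0n expn0 divn1.
exact: leq_trans (leq_addr _ _).
Qed.

Lemma w_low n K : K <= n -> n <= logn 2 n`! + n %/ 2 ^ K + K.
Proof.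
move=> Kn; rewrite logn_fact //; apply: leq_trans (tele_low n K) _.
rewrite leq_add2r leq_add2r (@big_cat_nat _ _ _ K.+1 1 n.+1) //=; exact: leq_addr.
Qed.
Definition S c := \sum_(0 <= i < c.+1) (if prime i then logn 2 i.-1 else 0).

Lemma vphi_up n : logn 2 (totient n`!) <= logn 2 n`! + S n.
Proof.
elim: n => [|n IH]; first by rewrite /S big_nat1.
rewrite phi_fact_S factS /S big_nat_recr //= -/(S n).
have tg : 0 < totient n`! by rewrite totient_gt0 fact_gt0.
case: ifP => pr.
  have n0 : 0 < n by have := prime_gt1 pr; lia.
  rewrite lognM // (lognM 2 (ltn0Sn n) (fact_gt0 n)); lia.
rewrite !lognM // ?fact_gt0 //; lia.
Qed.

Lemma vlow_aux p : prime p -> logn 2 p + (1 < p.-1) <= (1 < p).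
Proof.
move=> pp; case: (p =P 2) => [->|ne] //.
rewrite logn_coprime ?prime_coprime ?dvdn_prime2 //; last first.
  by apply/eqP => E; apply: ne.
have := prime_gt1 pp; case: p {pp ne} => // [[|p]] // _.
by rewrite add0n (_ : 1 < p.+2 = true) ?leq_b1.
Qed.

Lemma vphi_low n : logn 2 n`! <= logn 2 (totient n`!) + (1 < n).
Proof.
elim: n => [|n IH]; first by [].
have tg : 0 < totient n`! by rewrite totient_gt0 fact_gt0.
rewrite phi_fact_S factS; case: ifP => pr.
  have n0 : 0 < n by have := prime_gt1 pr; lia.
  rewrite !lognM ?fact_gt0 //; have := @vlow_aux n.+1 pr => /=; lia.
rewrite !lognM ?fact_gt0 //.
have : (1 < n) <= (1 < n.+1) by case: n {IH tg pr} => // [[|n]].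
lia.
Qed.

Lemma mult_count d c : 0 < d ->
  \sum_(0 <= i < c.+1) ((0 < i) && (d %| i)) = c %/ d.
Proof.
move=> d0; elim: c => [|c IH]; first by rewrite big_nat1 div0n.
by rewrite big_nat_recr //= IH divnS // addnC.
Qed.

Lemma sum_ext a m n (f : nat -> nat) : m <= n ->
  \sum_(a <= k < m) f k <= \sum_(a <= k < n) f k.
Proof.
move=> mn; case: (leqP a m) => am.
  by rewrite (@big_cat_nat _ _ _ m a n) //= leq_addr.
by rewrite big_geq // ltnW.
Qed.

Lemma S_bound c J : S c <= J * pi c + c %/ 2 ^ J.
Proof.
pose H i k := ((0 < i) && (2 ^ k %| i) : nat).
have step1 : S c <= \sum_(0 <= i < c.+1)
    (prime i * J + \sum_(J.+1 <= k < (J + c).+1) H i.-1 k).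
  rewrite /S big_seq [X in _ <= X]big_seq; apply: leq_sum => i.
  rewrite mem_index_iota => /andP [_ ic].
  case pr: (prime i); last by [].
  rewrite mul1n logn_count_dvd //.
  have i1 : 0 < i.-1 by have := prime_gt1 pr; lia.
  apply: leq_trans (@sum_ext 1 _ (J + c).+1 _ _) _; first by lia.
  rewrite (@big_cat_nat _ _ _ J.+1) //=; last by lia.
  apply: leq_add.
    apply: (@leq_trans (\sum_(1 <= k < J.+1) 1)); first by apply: leq_sum => k _; exact: leq_b1.
    by rewrite sum_nat_const_nat muln1 subn1.
  by apply: eq_leq; apply: eq_bigr => k _; rewrite /H i1.
apply: leq_trans step1 _; rewrite big_split /= -big_distrl /= mulnC -/(pi c) leq_add2l.
rewrite big_nat_recl //= big1_eq add0n exchange_big_nat /=.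
apply: leq_trans (tele_up c J c); apply: leq_trans (leq_addr _ _).
apply: leq_sum => k _.
rewrite -(@mult_count (2 ^ k) c) ?expn_gt0 // big_nat_recr //=.
exact: leq_addr.
Qed.
Lemma Kdiv K x : K * (x %/ 2 ^ K) <= x.
Proof.
apply: leq_trans (leq_divM x (2 ^ K)); rewrite mulnC leq_mul2l.
by rewrite ltnW ?orbT // ltn_expl.
Qed.

Lemma lower_nat K a b c : 0 < K -> K <= a -> K <= b -> c_adm a b c ->
  K * (a + b) <= (K + 2) * c + K * (2 * K + 2 + K * 2 ^ (4 * K * K).+1) + (a + b).
Proof.
move=> K0 Ka Kb /andP [c0 dv].
have ta : 0 < totient a`! by rewrite totient_gt0 fact_gt0.
have tb : 0 < totient b`! by rewrite totient_gt0 fact_gt0.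
have tc : 0 < totient c`! by rewrite totient_gt0 fact_gt0.
have h1 := dvdn_leq_log 2 tc dv; rewrite lognM // in h1.
have la := vphi_low a; have lb := vphi_low b.
have ba : (1 < a) <= 1 by exact: leq_b1.
have bb : (1 < b) <= 1 by exact: leq_b1.
have wa := @w_low a K Ka; have wb := @w_low b K Kb.
have uc := vphi_up c; have wc := w_up c.
have sc := S_bound c K.
have pc := pi_bound (4 * K * K) c.
have da := Kdiv K a; have db := Kdiv K b; have dc := Kdiv K c.
set A := a %/ 2 ^ K in wa da; set B := b %/ 2 ^ K in wb db.
set C := c %/ 2 ^ K in sc dc.
set P := pi c in sc pc.
set T := 2 ^ (4 * K * K).+1 in pc *.
have E1 : a + b <= c + S c + A + B + 2 * K + 2.
  by move: h1 la lb ba bb wa wb uc wc; clear; lia.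
have E2 : K * (a + b) <= K * (c + S c + A + B + 2 * K + 2) by rewrite leq_mul2l E1 orbT.
have E3 : K * S c <= K * (K * P) + K * C by rewrite -mulnDr leq_mul2l sc orbT.
have E6 : K * (K * P) <= K * (K * T) + c.
  move: pc; clear; rewrite !mulnA; set u := K * K * P; set v := K * K * T.
  rewrite -!mulnA -/u -/v. lia.
move: E2 E3 E6 da db dc; rewrite !mulnDr !mulnDl.
set x1 := K * S c; set x2 := K * (K * P); set x3 := K * C; set x4 := K * (K * T).
set x5 := K * A; set x6 := K * B; set x7 := K * c; set x8 := K * a; set x9 := K * b.
set y1 := K * (2 * K); set y2 := K * 2.
clear; lia.
Qed.

Local Open Scope ring_scope.

Lemma part1 (eps : rat) : 0 < eps ->
  exists N : nat, forall a b : nat, (N <= a)%N -> (N <= b)%N -> 1 - eps <= r_ab a b.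
Proof.
move=> e0.
have [K hK] : exists K : nat, 4 / eps < K%:R.
  by exists (Num.bound (4 / eps)); apply: archi_boundP; rewrite divr_ge0 // ltW.
have K0 : (0 < K)%N.
  by rewrite -(ltr0n rat); apply: lt_trans hK; rewrite divr_gt0.
have eK : 4 < eps * K%:R.
  by rewrite -(ltr_pdivrMl _ _ e0) mulrC.
set D := (2 * K + 2 + K * 2 ^ (4 * K * K).+1)%N.
exists (maxn K (K * D)) => a b Na Nb.
have [cadm _] := c_ab_spec a b.
set c := c_ab a b in cadm *.
have Ka : (K <= a)%N by apply: leq_trans Na; rewrite leq_maxl.
have Kb : (K <= b)%N by apply: leq_trans Nb; rewrite leq_maxl.
have KD : (K * D <= a + b)%N.
  by apply: leq_trans (leq_addr _ _); apply: leq_trans Na; rewrite leq_maxr.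
have H := @lower_nat K a b c K0 Ka Kb cadm.
rewrite -/D in H; clearbody D.
have X0 : (0 < a + b)%N by lia.
rewrite /r_ab -/c ler_pdivlMr ?ltr0n //.
move: H KD; rewrite -!(ler_nat rat) !natrM !natrD => H KD.
move: X0; rewrite -(ltr0n rat) natrD => X0.
set k := K%:R in H KD eK *; set x := a%:R + b%:R in H KD X0 *.
set cc := c%:R in H *; set d := D%:R in H KD.
have c0 : 0 <= cc by rewrite ler0n.
have k0 : 0 < k by rewrite ltr0n.
have h1 : 4 * x <= eps * k * x by rewrite ler_pM2r // ltW.
have h2 : 0 <= eps * x by rewrite mulr_ge0 // ltW.
have h3 : (k + 2) * ((1 - eps) * x) <= (k + 2) * cc.
  have -> : (k + 2) * ((1 - eps) * x) = k * x + 2 * x - eps * k * x - 2 * (eps * x) by ring.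
  lra.
by rewrite ler_pM2l in h3; lra.
Qed.

Lemma part2 (eps : rat) : 0 < eps -> forall N : nat,
  exists a b : nat, [/\ (N <= a)%N, (N <= b)%N & r_ab a b <= 1 + eps].
Proof.
move=> e0 N.
set k := totient N`!.
have [M hM] : exists M : nat, k%:R / eps < M%:R.
  by exists (Num.bound (k%:R / eps)); apply: archi_boundP; rewrite divr_ge0 // ltW.
set L := (k.+1 + M + N)%N.
exists N, L`!.+1; split => //.
  by apply: leqW; apply: leq_trans (fact_geq _); rewrite /L leq_addl.
have adm := @adm_exists N L`!.+1 L (ltn_addr _ (leq_addr _ _)) (leqnn _).
have [_ mn] := c_ab_spec N L`!.+1.
have cle := mn _ adm.
have ML : (M < L`!.+1)%N.
  rewrite ltnS; apply: leq_trans (fact_geq _); rewrite /L; lia.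
rewrite /r_ab ler_pdivrMr; last by rewrite ltr0n addnS.
move: cle; rewrite -(ler_nat rat) natrD -/k => cle.
move: ML; rewrite -(ltr_nat rat) => ML.
rewrite natrD.
have kM : k%:R < eps * M%:R by rewrite -ltr_pdivrMl // mulrC.
have hN : 0 <= eps * N%:R by rewrite mulr_ge0 // ltW.
have hb : eps * M%:R <= eps * (L`!.+1)%:R by rewrite ler_pM2l // ltW.
set B := (L`!.+1)%:R in cle ML hb *.
have -> : (1 + eps) * (N%:R + B) = N%:R + B + eps * N%:R + eps * B by ring.
have : 0 <= N%:R :> rat by rewrite ler0n.
lra.
Qed.

Theorem theorem1p2 :
  (forall eps : rat, 0 < eps ->
     exists N : nat, forall a b : nat, (N <= a)%N -> (N <= b)%N ->
       1 - eps <= r_ab a b) /\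
  (forall eps : rat, 0 < eps -> forall N : nat,
     exists a b : nat, [/\ (N <= a)%N, (N <= b)%N & r_ab a b <= 1 + eps]).
Proof. split; [exact: part1 | exact: part2]. Qed.
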